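(* In every standard NML model, let $\phi$ be a pattern of sort $\tau$ whose free variables are among $\vec x$ and whose free names are among $\vec{\mathsf b}$ together with possibly $\mathsf a{:}\alpha$ (with $\mathsf a$ not among $\vec{\mathsf b}$), let $z_{\mathsf a}{:}\alpha$ be a variable not occurring elsewhere, and let $\phi\{\mathsf a\mapsto z_{\mathsf a}\}$ be the result of replacing the name $\mathsf a$ by $z_{\mathsf a}$ in $\phi$. Then (1) $\text{И}\mathsf a{:}\alpha.\phi\iff\exists z_{\mathsf a}{:}\alpha.\Big(\big(\exists y{:}\tau.\ y\wedge\lceil z_{\mathsf a}\#(\vec{\mathsf b},\vec x,y)\rceil\big)\wedge\phi\{\mathsf a\mapsto z_{\mathsf a}\}\Big)$; (2) $\text{И}\mathsf a{:}\alpha.\phi\iff\forall z_{\mathsf a}{:}\alpha.\Big(\big(\exists y{:}\tau.\ y\wedge\lceil z_{\mathsf a}\#(\vec{\mathsf b},\vec x,y)\rceil\big)\Rightarrow\phi\{\mathsf a\mapsto z_{\mathsf a}\}\Big)$.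
   Context: NML patterns: $\phi::= x \mid \mathsf a \mid \phi\wedge\psi\mid\neg\phi\mid\exists x.\phi\mid\sigma(\phi_1,\dots,\phi_n)\mid \text{И}\mathsf a{:}\alpha.\phi$ (names separate from variables; И binds names); $\phi\Rightarrow\psi:=\neg\phi\vee\psi$ and $\forall x.\phi:=\neg\exists x.\neg\phi$. $(\vec{\mathsf b},\vec x,y)$ is a tuple (product sort), $\#:\alpha\times\tau'\to Pred$ the freshness symbol, $\lceil\cdot\rceil:Pred\to\tau$ the coercion. NML models: atoms $\mathbb A=\bigcup_\alpha\mathbb A_\alpha$, $G$ the sort-respecting permutations; carriers nonempty nominal $G$-sets; symbols equivariant set-valued maps. Standard models: name sorts are $\mathbb A_\alpha$, $M_{Pred}=\{\star\}$, $\lceil\cdot\rceil$ maps $\star$ to $M_\tau$, $\#$ holds of $(a,v)$ iff $a\notin supp(v)$, products are componentwise, and abstraction/swapping/concretion are canonical. Valuations: finite-domain, sort-respecting, finitely supported, injective on names. Semantics: $[\![x]\!]_\rho=\{\rho(x)\}$, $[\![\mathsf a]\!]_\rho=\{\rho(\mathsf a)\}$, symbols extended pointwise, $\wedge$ intersection, $\neg$ complement, $\exists$ union over values, $[\![\text{И}\mathsf a{:}\alpha.\phi]\!]_\rho=\bigcup_{a\in\mathbb A_\alpha\setminus supp(\rho)}\{v\in[\![\phi]\!]_{\rho[a/\mathsf a]}\mid a\notin supp(v)\}$. $\phi\iff\psi$ means equal denotations under every suitable valuation. *)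

(* Defs.v *)
From Stdlib Require Import List PeanoNat.
Import ListNotations.

Inductive sort (NS BS : Type) : Type :=
| SName (al : NS)
| SBase (b : BS)
| SPred
| SProd (s1 s2 : sort NS BS).
Arguments SName {NS BS} al.
Arguments SBase {NS BS} b.
Arguments SPred {NS BS}.
Arguments SProd {NS BS} s1 s2.

Record signature := Sig {
  NS : Type;
  BS : Type;
  NS_dec : forall x y : NS, {x = y} + {x <> y};
  BS_dec : forall x y : BS, {x = y} + {x <> y};
  Sym : Type;
  sym_args : Sym -> list (sort NS BS);
  sym_res : Sym -> sort NS BS }.

Section Syntax.
Variable Sg : signature.
Local Notation srt := (sort (NS Sg) (BS Sg)).

Definition sort_dec : forall s t : srt, {s = t} + {s <> t}.
Proof. decide equality; first [apply (NS_dec Sg) | apply (BS_dec Sg)]. Defined.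

Definition atom : Type := (NS Sg * nat)%type.

Record perm := Perm {
  pf : atom -> atom;
  pinv : atom -> atom;
  pf_pinv : forall a, pf (pinv a) = a;
  pinv_pf : forall a, pinv (pf a) = a;
  pf_sort : forall a, fst (pf a) = fst a;
  pf_fin : exists l : list atom, forall a, ~ In a l -> pf a = a }.

Definition perm_id : perm.
Proof.
  refine (Perm (fun a => a) (fun a => a) _ _ _ _); try reflexivity.
  exists nil; reflexivity.
Defined.

Definition perm_comp (p1 p2 : perm) : perm.
Proof.
  refine (Perm (fun a => pf p1 (pf p2 a)) (fun a => pinv p2 (pinv p1 a)) _ _ _ _).
  - intro a; rewrite pf_pinv, pf_pinv; reflexivity.
  - intro a; rewrite pinv_pf, pinv_pf; reflexivity.
  - intro a; rewrite pf_sort, pf_sort; reflexivity.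
  - destruct (pf_fin p1) as [l1 H1]; destruct (pf_fin p2) as [l2 H2].
    exists (l1 ++ l2); intros a Ha; rewrite in_app_iff in Ha.
    rewrite (H2 a), (H1 a); tauto.
Defined.

Definition supports {T : Type} (actT : perm -> T -> T) (S : list atom) (x : T) : Prop :=
  forall p : perm, (forall a, In a S -> pf p a = a) -> actT p x = x.
Definition in_supp {T : Type} (actT : perm -> T -> T) (a : atom) (x : T) : Prop :=
  forall S : list atom, supports actT S x -> In a S.

Fixpoint car (C : BS Sg -> Type) (s : srt) : Type :=
  match s with
  | SName al => {a : atom | fst a = al}
  | SBase b => C b
  | SPred => unit
  | SProd s1 s2 => (car C s1 * car C s2)%type
  end.

Fixpoint cars (C : BS Sg -> Type) (l : list srt) : Type :=
  match l with
  | nil => unit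
  | s :: l' => (car C s * cars C l')%type
  end.

Definition act_atom (p : perm) (al : NS Sg) (a : {a : atom | fst a = al}) :
  {a : atom | fst a = al} :=
  exist _ (pf p (proj1_sig a)) (eq_trans (pf_sort p (proj1_sig a)) (proj2_sig a)).

Fixpoint act (C : BS Sg -> Type) (A : forall b, perm -> C b -> C b) (p : perm)
  (s : srt) : car C s -> car C s :=
  match s return car C s -> car C s with
  | SName al => act_atom p al
  | SBase b => A b p
  | SPred => fun u => u
  | SProd s1 s2 => fun v => (act C A p s1 (fst v), act C A p s2 (snd v))
  end.

Fixpoint acts (C : BS Sg -> Type) (A : forall b, perm -> C b -> C b) (p : perm)
  (l : list srt) : cars C l -> cars C l :=
  match l return cars C l -> cars C l with
  | nil => fun u => u
  | s :: l' => fun v => (act C A p s (fst v), acts C A p l' (snd v))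
  end.

(* Standard NML models (for the signature, with base sorts arbitrary
   nonempty nominal G-sets and symbols arbitrary equivariant set-valued maps). *)
Record model := Model {
  mcar : BS Sg -> Type;
  mact : forall b, perm -> mcar b -> mcar b;
  mact_id : forall b x, mact b perm_id x = x;
  mact_comp : forall b p1 p2 x, mact b (perm_comp p1 p2) x = mact b p1 (mact b p2 x);
  mfin : forall b x, exists S : list atom, supports (mact b) S x;
  mnonempty : forall b, inhabited (mcar b);
  minterp : forall sg : Sym Sg,
      cars mcar (sym_args Sg sg) -> car mcar (sym_res Sg sg) -> Prop;
  minterp_equiv : forall sg (p : perm) u v,
      minterp sg u v <->
      minterp sg (acts mcar mact p _ u) (act mcar mact p _ v) }.

(* Patterns.  Variables are pairs (x, s) (name x, sort s); names are pairs
   (n, al).  PEx x t binds the variable (x,t); PNew n al binds the name (n,al). *)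
Inductive pat : srt -> Type :=
| PVar (x : nat) (s : srt) : pat s
| PName (n : nat) (al : NS Sg) : pat (SName al)
| PAnd (s : srt) : pat s -> pat s -> pat s
| PNot (s : srt) : pat s -> pat s
| PEx (s : srt) (x : nat) (t : srt) : pat s -> pat s
| PSym (sg : Sym Sg) : pats (sym_args Sg sg) -> pat (sym_res Sg sg)
| PNew (s : srt) (n : nat) (al : NS Sg) : pat s -> pat s
| PPair (s1 s2 : srt) : pat s1 -> pat s2 -> pat (SProd s1 s2)
| PFresh (al : NS Sg) (t : srt) : pat (SName al) -> pat t -> pat SPred
| PCeil (t : srt) : pat SPred -> pat t
with pats : list srt -> Type :=
| PNil : pats nil
| PCons (s : srt) (l : list srt) : pat s -> pats l -> pats (s :: l).

Arguments PAnd {s}. Arguments PNot {s}. Arguments PEx {s}. Arguments PNew {s}.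
Arguments PPair {s1 s2}. Arguments PFresh {al t}. Arguments PCons {s l}.

Definition POr {s} (p q : pat s) : pat s := PNot (PAnd (PNot p) (PNot q)).
Definition PImp {s} (p q : pat s) : pat s := POr (PNot p) q.
Definition PAll {s} (x : nat) (t : srt) (p : pat s) : pat s := PNot (PEx x t (PNot p)).

Definition var_eqb (v w : nat * srt) : bool :=
  if Nat.eq_dec (fst v) (fst w) then if sort_dec (snd v) (snd w) then true else false
  else false.
Definition name_eqb (v w : nat * NS Sg) : bool :=
  if Nat.eq_dec (fst v) (fst w) then if NS_dec Sg (snd v) (snd w) then true else false
  else false.

Fixpoint fvars {s} (p : pat s) : list (nat * srt) :=
  match p with
  | PVar x s0 => [(x, s0)]
  | PName _ _ => nil
  | PAnd p1 p2 => fvars p1 ++ fvars p2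
  | PNot p1 => fvars p1
  | PEx x t p1 => filter (fun v => negb (var_eqb v (x, t))) (fvars p1)
  | PSym _ ps => fvars_args ps
  | PNew _ _ p1 => fvars p1
  | PPair p1 p2 => fvars p1 ++ fvars p2
  | PFresh p1 p2 => fvars p1 ++ fvars p2
  | PCeil _ p1 => fvars p1
  end
with fvars_args {l} (ps : pats l) : list (nat * srt) :=
  match ps with
  | PNil => nil
  | PCons p1 ps' => fvars p1 ++ fvars_args ps'
  end.

Fixpoint allvars {s} (p : pat s) : list (nat * srt) :=
  match p with
  | PVar x s0 => [(x, s0)]
  | PName _ _ => nil
  | PAnd p1 p2 => allvars p1 ++ allvars p2
  | PNot p1 => allvars p1
  | PEx x t p1 => (x, t) :: allvars p1
  | PSym _ ps => allvars_args ps
  | PNew _ _ p1 => allvars p1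
  | PPair p1 p2 => allvars p1 ++ allvars p2
  | PFresh p1 p2 => allvars p1 ++ allvars p2
  | PCeil _ p1 => allvars p1
  end
with allvars_args {l} (ps : pats l) : list (nat * srt) :=
  match ps with
  | PNil => nil
  | PCons p1 ps' => allvars p1 ++ allvars_args ps'
  end.

Fixpoint fnames {s} (p : pat s) : list (nat * NS Sg) :=
  match p with
  | PVar _ _ => nil
  | PName n al => [(n, al)]
  | PAnd p1 p2 => fnames p1 ++ fnames p2
  | PNot p1 => fnames p1
  | PEx _ _ p1 => fnames p1
  | PSym _ ps => fnames_args ps
  | PNew n al p1 => filter (fun v => negb (name_eqb v (n, al))) (fnames p1)
  | PPair p1 p2 => fnames p1 ++ fnames p2
  | PFresh p1 p2 => fnames p1 ++ fnames p2
  | PCeil _ p1 => fnames p1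
  end
with fnames_args {l} (ps : pats l) : list (nat * NS Sg) :=
  match ps with
  | PNil => nil
  | PCons p1 ps' => fnames p1 ++ fnames_args ps'
  end.

Fixpoint nsubst (a : nat) (al : NS Sg) (z : nat) {s} (p : pat s) : pat s :=
  match p in pat s0 return pat s0 with
  | PVar x s0 => PVar x s0
  | PName n be =>
      if name_eqb (n, be) (a, al) then PVar z (SName be) else PName n be
  | PAnd p1 p2 => PAnd (nsubst a al z p1) (nsubst a al z p2)
  | PNot p1 => PNot (nsubst a al z p1)
  | PEx x t p1 => PEx x t (nsubst a al z p1)
  | PSym sg ps => PSym sg (nsubst_args a al z ps)
  | PNew n be p1 =>
      if name_eqb (n, be) (a, al) then PNew n be p1 else PNew n be (nsubst a al z p1)
  | PPair p1 p2 => PPair (nsubst a al z p1) (nsubst a al z p2)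
  | PFresh p1 p2 => PFresh (nsubst a al z p1) (nsubst a al z p2)
  | PCeil t p1 => PCeil t (nsubst a al z p1)
  end
with nsubst_args (a : nat) (al : NS Sg) (z : nat) {l} (ps : pats l) : pats l :=
  match ps in pats l0 return pats l0 with
  | PNil => PNil
  | PCons p1 ps' => PCons (nsubst a al z p1) (nsubst_args a al z ps')
  end.

(* The tuple (b_1, ..., b_k, x_1, ..., x_m, y), as right-nested pairs. *)
Fixpoint xs_sort (xs : list (nat * srt)) (tau : srt) : srt :=
  match xs with
  | nil => tau
  | v :: xs' => SProd (snd v) (xs_sort xs' tau)
  end.
Fixpoint xs_tup (xs : list (nat * srt)) (y : nat) (tau : srt) : pat (xs_sort xs tau) :=
  match xs as l return pat (xs_sort l tau) with
  | nil => PVar y tau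
  | v :: xs' => PPair (PVar (fst v) (snd v)) (xs_tup xs' y tau)
  end.
Fixpoint bs_sort (bs : list (nat * NS Sg)) (T : srt) : srt :=
  match bs with
  | nil => T
  | b :: bs' => SProd (SName (snd b)) (bs_sort bs' T)
  end.
Fixpoint bs_tup (bs : list (nat * NS Sg)) {T : srt} (t : pat T) : pat (bs_sort bs T) :=
  match bs as l return pat (bs_sort l T) with
  | nil => t
  | b :: bs' => PPair (PName (fst b) (snd b)) (bs_tup bs' t)
  end.
Definition tuple_pat (bs : list (nat * NS Sg)) (xs : list (nat * srt)) (y : nat)
  (tau : srt) : pat (bs_sort bs (xs_sort xs tau)) :=
  bs_tup bs (xs_tup xs y tau).

Definition fresh_guard (al : NS Sg) (z : nat) (bs : list (nat * NS Sg))
  (xs : list (nat * srt)) (y : nat) (tau : srt) : pat tau :=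
  PEx y tau (PAnd (PVar y tau)
                  (PCeil tau (PFresh (PVar z (SName al)) (tuple_pat bs xs y tau)))).

End Syntax.

Arguments PVar {Sg}. Arguments PName {Sg}. Arguments PAnd {Sg s}. Arguments PNot {Sg s}.
Arguments PEx {Sg s}. Arguments PSym {Sg}. Arguments PNew {Sg s}. Arguments PPair {Sg s1 s2}.
Arguments PFresh {Sg al t}. Arguments PCeil {Sg}. Arguments PNil {Sg}. Arguments PCons {Sg s l}.
Arguments POr {Sg s}. Arguments PImp {Sg s}. Arguments PAll {Sg s}.
Arguments fvars {Sg s}. Arguments allvars {Sg s}. Arguments fnames {Sg s}.
Arguments nsubst {Sg} a al z {s}.
Arguments fresh_guard {Sg}.

Section Semantics.
Variable Sg : signature.
Variable M : model Sg.
Local Notation srt := (sort (NS Sg) (BS Sg)).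
Local Notation carM := (car Sg (mcar Sg M)).
Local Notation actM p s := (act Sg (mcar Sg M) (mact Sg M) p s).
Definition suppM (s : srt) (a : atom Sg) (v : carM s) : Prop :=
  in_supp Sg (fun p => actM p s) a v.

Record valuation := Val {
  vvar : nat -> forall s : srt, option (carM s);
  vname : nat -> forall al : NS Sg, option (carM (SName al)) }.

Definition valid_val (r : valuation) : Prop :=
  (exists LV : list (nat * srt), forall x s, vvar r x s <> None -> In (x, s) LV) /\
  (exists LN : list (nat * NS Sg), forall n al, vname r n al <> None -> In (n, al) LN) /\
  (exists S : list (atom Sg),
      (forall x s v, vvar r x s = Some v -> supports Sg (fun p => actM p s) S v) /\
      (forall n al v, vname r n al = Some v ->
                      supports Sg (fun p => actM p (SName al)) S v)) /\
  (forall n al m be (u : carM (SName al)) (w : carM (SName be)),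
      vname r n al = Some u -> vname r m be = Some w ->
      proj1_sig u = proj1_sig w -> n = m /\ al = be).

Definition val_supp (r : valuation) (a : atom Sg) : Prop :=
  (exists x s v, vvar r x s = Some v /\ suppM s a v) \/
  (exists n al (u : carM (SName al)), vname r n al = Some u /\ proj1_sig u = a).

Definition upd_var (r : valuation) (x : nat) (t : srt) (u : carM t) : valuation :=
  Val (fun y s => match Nat.eq_dec y x with
                  | left _ => match sort_dec Sg t s with
                              | left e => Some (eq_rect t carM u s e)
                              | right _ => vvar r y s
                              end
                  | right _ => vvar r y s
                  end)
      (vname r).

Definition upd_name (r : valuation) (n : nat) (al : NS Sg) (u : carM (SName al)) :
  valuation :=
  Val (vvar r)
      (fun m be => match Nat.eq_dec m n with
                   | left _ => match NS_dec Sg al be with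
                               | left e => Some (eq_rect al (fun g => carM (SName g)) u be e)
                               | right _ => vname r m be
                               end
                   | right _ => vname r m be
                   end).

Fixpoint denote {s} (p : pat Sg s) (r : valuation) {struct p} : carM s -> Prop :=
  match p in pat _ s0 return carM s0 -> Prop with
  | PVar x s0 => fun v => vvar r x s0 = Some v
  | PName n al => fun v => vname r n al = Some v
  | PAnd p1 p2 => fun v => denote p1 r v /\ denote p2 r v
  | PNot p1 => fun v => ~ denote p1 r v
  | PEx x t p1 => fun v => exists u : carM t, denote p1 (upd_var r x t u) v
  | PSym sg ps => fun v =>
      exists u, denote_args ps r u /\ minterp Sg M sg u v
  | @PNew _ s0 n al p1 => fun v =>
      exists a0 : carM (SName al),
        ~ val_supp r (proj1_sig a0) /\
        denote p1 (upd_name r n al a0) v /\ ~ suppM s0 (proj1_sig a0) v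
  | PPair p1 p2 => fun v => denote p1 r (fst v) /\ denote p2 r (snd v)
  | @PFresh _ al t p1 p2 => fun _ =>
      exists (a0 : carM (SName al)) (u : carM t),
        denote p1 r a0 /\ denote p2 r u /\ ~ suppM t (proj1_sig a0) u
  | PCeil t p1 => fun _ => exists u : unit, denote p1 r u
  end
with denote_args {l} (ps : pats Sg l) (r : valuation) {struct ps} :
  cars Sg (mcar Sg M) l -> Prop :=
  match ps in pats _ l0 return cars Sg (mcar Sg M) l0 -> Prop with
  | PNil => fun _ => True
  | PCons p1 ps' => fun u => denote p1 r (fst u) /\ denote_args ps' r (snd u)
  end.

Definition suitable (r : valuation) {s} (p : pat Sg s) : Prop :=
  (forall v, In v (fvars p) -> vvar r (fst v) (snd v) <> None) /\
  (forall n, In n (fnames p) -> vname r (fst n) (snd n) <> None).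

Definition pequiv {s} (p q : pat Sg s) : Prop :=
  forall r : valuation, valid_val r -> suitable r p -> suitable r q ->
  forall v : carM s, denote p r v <-> denote q r v.

End Semantics.

Arguments pequiv {Sg} M {s}.

(* Main.v *)
Require Import Defs.
From Stdlib Require Import List.
From Stdlib Require Import Lia PeanoNat Classical FunctionalExtensionality ProofIrrelevance Eqdep_dec Setoid.
Import ListNotations.


Scheme pat_mut := Induction for pat Sort Prop with pats_mut := Induction for pats Sort Prop.

Section Aux.
Variable Sg : signature.
Variable M : model Sg.
Local Notation srt := (sort (NS Sg) (BS Sg)).
Local Notation atm := (atom Sg).
Local Notation PF := (pf Sg).
Local Notation carM := (car Sg (mcar Sg M)).
Local Notation actM p s := (act Sg (mcar Sg M) (mact Sg M) p s).
Local Notation actsM p l := (acts Sg (mcar Sg M) (mact Sg M) p l).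

Definition atom_dec : forall x y : atm, {x = y} + {x <> y}.
Proof. intros [a n] [b m]. destruct (NS_dec Sg a b); destruct (Nat.eq_dec n m);
  [left; congruence| right; congruence ..]. Defined.

Lemma perm_ext (p q : perm Sg) : (forall a, PF p a = PF q a) -> p = q.
Proof.
  destruct p as [f fi H1 H2 H3 H4], q as [g gi K1 K2 K3 K4]; simpl; intro E.
  assert (f = g) by (apply functional_extensionality; auto). subst g.
  assert (fi = gi). { apply functional_extensionality; intro a.
    rewrite <- (K1 a) at 1. rewrite H2. reflexivity. }
  subst gi. f_equal; apply proof_irrelevance.
Qed.

Lemma sig_eq al (x y : {a : atm | fst a = al}) : proj1_sig x = proj1_sig y -> x = y.
Proof. destruct x, y; simpl; intro; subst; f_equal; apply proof_irrelevance. Qed.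

Lemma act_comp s p q (x : carM s) : actM (perm_comp Sg p q) s x = actM p s (actM q s x).
Proof.
  induction s; simpl.
  - apply sig_eq; reflexivity.
  - apply mact_comp.
  - reflexivity.
  - rewrite IHs1, IHs2; reflexivity.
Qed.

Lemma act_id s (x : carM s) : actM (perm_id Sg) s x = x.
Proof.
  induction s; simpl.
  - apply sig_eq; reflexivity.
  - apply mact_id.
  - reflexivity.
  - rewrite IHs1, IHs2; destruct x; reflexivity.
Qed.

Lemma acts_comp l p q (x : cars Sg (mcar Sg M) l) :
  actsM (perm_comp Sg p q) l x = actsM p l (actsM q l x).
Proof. induction l; simpl. reflexivity. rewrite act_comp, IHl; reflexivity. Qed.

Lemma acts_id l (x : cars Sg (mcar Sg M) l) : actsM (perm_id Sg) l x = x.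
Proof. induction l; simpl. reflexivity. rewrite act_id, IHl; destruct x; reflexivity. Qed.

Definition perm_inv (p : perm Sg) : perm Sg.
Proof.
  refine (Perm Sg (pinv Sg p) (pf Sg p) _ _ _ _).
  - apply pinv_pf.
  - apply pf_pinv.
  - intro a. rewrite <- (pf_sort Sg p (pinv Sg p a)), pf_pinv. reflexivity.
  - destruct (pf_fin Sg p) as [l H]; exists l; intros a Ha.
    rewrite <- (H a Ha) at 1. apply pinv_pf.
Defined.

Lemma comp_inv_r p : perm_comp Sg p (perm_inv p) = perm_id Sg.
Proof. apply perm_ext; intro a; simpl; apply pf_pinv. Qed.
Lemma comp_inv_l p : perm_comp Sg (perm_inv p) p = perm_id Sg.
Proof. apply perm_ext; intro a; simpl; apply pinv_pf. Qed.

Lemma act_inv_l p s (x : carM s) : actM p s (actM (perm_inv p) s x) = x.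
Proof. rewrite <- act_comp, comp_inv_r; apply act_id. Qed.
Lemma act_inv_r p s (x : carM s) : actM (perm_inv p) s (actM p s x) = x.
Proof. rewrite <- act_comp, comp_inv_l; apply act_id. Qed.
Lemma acts_inv_l p l x : actsM p l (actsM (perm_inv p) l x) = x.
Proof. rewrite <- acts_comp, comp_inv_r; apply acts_id. Qed.
Lemma acts_inv_r p l x : actsM (perm_inv p) l (actsM p l x) = x.
Proof. rewrite <- acts_comp, comp_inv_l; apply acts_id. Qed.
Lemma act_inj p s (x y : carM s) : actM p s x = actM p s y -> x = y.
Proof. intro H. rewrite <- (act_inv_r p s x), H. apply act_inv_r. Qed.

Definition swapf (a b c : atm) : atm :=
  if atom_dec c a then b else if atom_dec c b then a else c.

Lemma swapf_inv a b c : swapf a b (swapf a b c) = c.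
Proof. unfold swapf. repeat (destruct atom_dec); subst; congruence. Qed.

Definition swap (a b : atm) (H : fst a = fst b) : perm Sg.
Proof.
  refine (Perm Sg (swapf a b) (swapf a b) (swapf_inv a b) (swapf_inv a b) _ _).
  - intro c; unfold swapf; repeat (destruct atom_dec); subst; congruence.
  - exists [a; b]; intros c Hc; unfold swapf; simpl in Hc.
    repeat (destruct atom_dec); subst; tauto.
Defined.

Definition sup s (S : list atm) (x : carM s) := supports Sg (fun p => actM p s) S x.
Definition sM s a (x : carM s) := suppM Sg M s a x.

Lemma not_supp_iff s a (x : carM s) : ~ sM s a x <-> exists S, sup s S x /\ ~ In a S.
Proof.
  unfold sM, suppM, in_supp, sup. split.
  - intro H. apply not_all_ex_not in H. destruct H as [S H].
    exists S. tauto.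
  - intros [S [H1 H2]] H. apply H2, H, H1.
Qed.

Lemma sup_app_l s S T (x : carM s) : sup s S x -> sup s (S ++ T) x.
Proof. intros H p Hp. apply H; intros; apply Hp, in_or_app; auto. Qed.
Lemma sup_app_r s S T (x : carM s) : sup s T x -> sup s (S ++ T) x.
Proof. intros H p Hp. apply H; intros; apply Hp, in_or_app; auto. Qed.

Lemma elem_fin s (x : carM s) : exists S, sup s S x.
Proof.
  induction s; simpl in *.
  - exists [proj1_sig x]. intros p Hp. apply sig_eq. simpl. apply Hp; simpl; auto.
  - apply (mfin Sg M).
  - exists nil. intros p _. reflexivity.
  - destruct x as [x1 x2]. destruct (IHs1 x1) as [S1 H1], (IHs2 x2) as [S2 H2].
    exists (S1 ++ S2). intros p Hp. simpl.
    rewrite (sup_app_l _ _ S2 _ H1 p Hp), (sup_app_r _ S1 _ _ H2 p Hp). reflexivity.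
Qed.

Lemma sup_act s S p (x : carM s) : sup s S x -> sup s (map (PF p) S) (actM p s x).
Proof.
  intros H q Hq.
  set (q' := perm_comp Sg (perm_inv p) (perm_comp Sg q p)).
  assert (Hq' : forall a, In a S -> PF q' a = a).
  { intros a Ha. simpl. rewrite (Hq (PF p a)). apply pinv_pf. apply in_map; auto. }
  transitivity (actM p s (actM q' s x)).
  - unfold q'. rewrite !act_comp, act_inv_l. reflexivity.
  - rewrite (H q' Hq'). reflexivity.
Qed.

Lemma supp_act s a p (x : carM s) : sM s a x -> sM s (PF p a) (actM p s x).
Proof.
  intros H S HS.
  pose proof (sup_act s S (perm_inv p) _ HS) as K. rewrite act_inv_r in K.
  apply H in K. apply in_map_iff in K. destruct K as [c [E Hc]]. simpl in E.
  subst. rewrite pf_pinv. exact Hc.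
Qed.

Lemma supp_act_inv s a p (x : carM s) : sM s (PF p a) (actM p s x) -> sM s a x.
Proof.
  intro H. apply (supp_act _ _ (perm_inv p)) in H. simpl in H.
  rewrite pinv_pf, act_inv_r in H. exact H.
Qed.

Lemma fresh_exists (L : list atm) al : exists c : atm, fst c = al /\ ~ In c L.
Proof.
  exists (al, S (list_max (map snd L))). split. reflexivity. intro H.
  assert (K : In (snd (al, S (list_max (map snd L)))) (map snd L)) by (apply in_map; auto).
  simpl in K.
  assert (K2 := proj1 (list_max_le (map snd L) (list_max (map snd L))) (le_n _)).
  rewrite Forall_forall in K2. specialize (K2 _ K). lia.
Qed.

Lemma in_dec_atom (a : atm) L : {In a L} + {~ In a L}.
Proof. apply in_dec, atom_dec. Qed.

Lemma sup_atom al (u : carM (SName al)) : sup (SName al) [proj1_sig u] u.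
Proof. intros p Hp. apply sig_eq. simpl. apply Hp; simpl; auto. Qed.

Lemma supp_atom al b (u : carM (SName al)) : sM (SName al) b u <-> b = proj1_sig u.
Proof.
  split.
  - intro H. specialize (H _ (sup_atom al u)). simpl in H. intuition.
  - intros E S HS. subst b. destruct (in_dec_atom (proj1_sig u) S) as [|n]; auto.
    exfalso. destruct (fresh_exists (proj1_sig u :: S) al) as [c [Hc Hn]].
    assert (Hs : fst (proj1_sig u) = fst c) by (rewrite Hc; apply (proj2_sig u)).
    specialize (HS (swap _ _ Hs)).
    assert (K : actM (swap _ _ Hs) (SName al) u = u).
    { apply HS. intros d Hd. simpl. unfold swapf.
      repeat destruct atom_dec; subst; simpl in *; tauto. }
    apply (f_equal (@proj1_sig _ _)) in K. simpl in K. unfold swapf in K.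
    destruct atom_dec; [|congruence]. apply Hn; left; auto.
Qed.

Lemma swap_fix a b (H : fst a = fst b) s (x : carM s) :
  ~ sM s a x -> ~ sM s b x -> actM (swap a b H) s x = x.
Proof.
  intros Ha Hb. destruct (atom_dec a b) as [eab|nab].
  { subst b. assert (E : swap a a H = perm_id Sg).
    { apply perm_ext; intro d; simpl; unfold swapf; repeat destruct atom_dec; congruence. }
    rewrite E; apply act_id. }
  apply not_supp_iff in Ha, Hb.
  destruct Ha as [S1 [H1 N1]], Hb as [S2 [H2 N2]].
  destruct (fresh_exists (a :: b :: S1 ++ S2) (fst a)) as [c [Hc Hn]].
  assert (Hac : fst a = fst c) by auto.
  assert (Hbc : fst b = fst c) by congruence.
  assert (E : swap a b H = perm_comp Sg (swap a c Hac) (perm_comp Sg (swap b c Hbc) (swap a c Hac))).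
  { apply perm_ext. intro d. simpl. unfold swapf.
    assert (c <> a) by (intro; apply Hn; subst; simpl; auto).
    assert (c <> b) by (intro; apply Hn; subst; simpl; auto).
    repeat destruct atom_dec; subst; congruence. }
  assert (F1 : actM (swap a c Hac) s x = x).
  { apply H1. intros d Hd. simpl. unfold swapf.
    repeat destruct atom_dec; subst; try tauto.
    exfalso; apply Hn; simpl; right; right; apply in_or_app; auto. }
  assert (F2 : actM (swap b c Hbc) s x = x).
  { apply H2. intros d Hd. simpl. unfold swapf.
    repeat destruct atom_dec; subst; try tauto.
    exfalso; apply Hn; simpl; right; right; apply in_or_app; auto. }
  rewrite E, !act_comp, F1, F2, F1. reflexivity.
Qed.

Lemma sup_fst s1 s2 S (w : carM (SProd s1 s2)) : sup (SProd s1 s2) S w -> sup s1 S (fst w).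
Proof. intros H p Hp. specialize (H p Hp). simpl in H. rewrite <- H at 2. reflexivity. Qed.
Lemma sup_snd s1 s2 S (w : carM (SProd s1 s2)) : sup (SProd s1 s2) S w -> sup s2 S (snd w).
Proof. intros H p Hp. specialize (H p Hp). simpl in H. rewrite <- H at 2. reflexivity. Qed.

Lemma supp_fst s1 s2 a (w : carM (SProd s1 s2)) : sM s1 a (fst w) -> sM (SProd s1 s2) a w.
Proof. intros H S HS. apply H, sup_fst, HS. Qed.
Lemma supp_snd s1 s2 a (w : carM (SProd s1 s2)) : sM s2 a (snd w) -> sM (SProd s1 s2) a w.
Proof. intros H S HS. apply H, (sup_snd s1), HS. Qed.

Lemma fresh_pair s1 s2 a (w : carM (SProd s1 s2)) :
  ~ sM s1 a (fst w) -> ~ sM s2 a (snd w) -> ~ sM (SProd s1 s2) a w.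
Proof.
  intros H1 H2. apply not_supp_iff in H1, H2. apply not_supp_iff.
  destruct H1 as [S1 [K1 N1]], H2 as [S2 [K2 N2]]. exists (S1 ++ S2). split.
  - intros p Hp. destruct w as [w1 w2]. simpl in *.
    rewrite (sup_app_l _ _ S2 _ K1 p Hp), (sup_app_r _ S1 _ _ K2 p Hp). reflexivity.
  - rewrite in_app_iff; tauto.
Qed.

Definition fin_val (r : valuation Sg M) : Prop :=
  exists S, (forall x s v, vvar Sg M r x s = Some v -> sup s S v) /\
            (forall n al v, vname Sg M r n al = Some v -> sup (SName al) S v).

Lemma valid_fin r : valid_val Sg M r -> fin_val r.
Proof. intros (_ & _ & [S [H1 H2]] & _). exists S; split; auto. Qed.

Lemma fin_val_supp r : fin_val r -> exists L, forall a, val_supp Sg M r a -> In a L.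
Proof.
  intros [S [H1 H2]]. exists S. intros a [(x & s & v & E & K)|(n & al & u & E & K)].
  - apply K, (H1 _ _ _ E).
  - subst a. apply (proj2 (supp_atom al (proj1_sig u) u) eq_refl), (H2 _ _ _ E).
Qed.

Lemma upd_var_eq r x t u : vvar Sg M (upd_var Sg M r x t u) x t = Some u.
Proof.
  unfold upd_var; simpl. destruct (Nat.eq_dec x x); [|congruence].
  destruct (sort_dec Sg t t) as [e0|]; [|congruence].
  rewrite (UIP_dec (sort_dec Sg) e0 eq_refl). reflexivity.
Qed.
Lemma upd_var_neq r x t u y s : (y, s) <> (x, t) ->
  vvar Sg M (upd_var Sg M r x t u) y s = vvar Sg M r y s.
Proof.
  intro N. unfold upd_var; simpl. destruct (Nat.eq_dec y x); auto.
  destruct (sort_dec Sg t s); auto. subst; congruence.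
Qed.
Lemma upd_name_eq r n al u : vname Sg M (upd_name Sg M r n al u) n al = Some u.
Proof.
  unfold upd_name; simpl. destruct (Nat.eq_dec n n); [|congruence].
  destruct (NS_dec Sg al al) as [e0|]; [|congruence].
  rewrite (UIP_dec (NS_dec Sg) e0 eq_refl). reflexivity.
Qed.
Lemma upd_name_neq r n al u m be : (m, be) <> (n, al) ->
  vname Sg M (upd_name Sg M r n al u) m be = vname Sg M r m be.
Proof.
  intro N. unfold upd_name; simpl. destruct (Nat.eq_dec m n); auto.
  destruct (NS_dec Sg al be); auto. subst; congruence.
Qed.

Lemma fin_upd_var r x t u : fin_val r -> fin_val (upd_var Sg M r x t u).
Proof.
  intros [S [H1 H2]]. destruct (elem_fin t u) as [T HT]. exists (S ++ T). split.
  - intros y s v E. destruct (sort_dec Sg t s) as [e|n']; [subst s|].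
    + destruct (Nat.eq_dec y x); [subst y|].
      * rewrite upd_var_eq in E. injection E; intro; subst. apply sup_app_r, HT.
      * rewrite upd_var_neq in E by congruence. apply sup_app_l, (H1 _ _ _ E).
    + rewrite upd_var_neq in E by congruence. apply sup_app_l, (H1 _ _ _ E).
  - intros n al v E. apply sup_app_l, (H2 _ _ _ E).
Qed.

Lemma fin_upd_name r n al u : fin_val r -> fin_val (upd_name Sg M r n al u).
Proof.
  intros [S [H1 H2]]. exists (S ++ [proj1_sig u]). split.
  - intros y s v E. apply sup_app_l, (H1 _ _ _ E).
  - intros m be v E. destruct (NS_dec Sg al be) as [e|n']; [subst be|].
    + destruct (Nat.eq_dec m n); [subst m|].
      * rewrite upd_name_eq in E. injection E; intro; subst. apply sup_app_r, sup_atom.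
      * rewrite upd_name_neq in E by congruence. apply sup_app_l, (H2 _ _ _ E).
    + rewrite upd_name_neq in E by congruence. apply sup_app_l, (H2 _ _ _ E).
Qed.

Lemma name_eqb_spec v w : name_eqb Sg v w = true <-> v = w.
Proof.
  destruct v as [n a], w as [m b]. unfold name_eqb; simpl.
  destruct (Nat.eq_dec n m); destruct (NS_dec Sg a b); subst; split; intro; congruence.
Qed.
Lemma var_eqb_spec v w : var_eqb Sg v w = true <-> v = w.
Proof.
  destruct v as [n a], w as [m b]. unfold var_eqb; simpl.
  destruct (Nat.eq_dec n m); destruct (sort_dec Sg a b); subst; split; intro; congruence.
Qed.
End Aux.

Combined Scheme pat_comb from pat_mut, pats_mut.

Section B.
Variable Sg : signature.
Variable M : model Sg.
Local Notation srt := (sort (NS Sg) (BS Sg)).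
Local Notation atm := (atom Sg).
Local Notation PF := (pf Sg).
Local Notation carM := (car Sg (mcar Sg M)).
Local Notation actM p s := (act Sg (mcar Sg M) (mact Sg M) p s).
Local Notation actsM p l := (acts Sg (mcar Sg M) (mact Sg M) p l).
Local Notation sM := (sM Sg M).
Local Notation sup := (sup Sg M).
Local Notation fin_val := (fin_val Sg M).

Lemma nsubst_id_all a al z :
  (forall s (q : pat Sg s), ~ In (a, al) (fnames q) -> nsubst a al z q = q) /\
  (forall l (qs : pats Sg l), ~ In (a, al) (fnames_args Sg qs) -> nsubst_args Sg a al z qs = qs).
Proof.
  apply pat_comb; intros; simpl in *; try rewrite in_app_iff in *;
    try (f_equal; auto; fail).
  - destruct (name_eqb Sg (n, al0) (a, al)) eqn:E; auto.
    apply name_eqb_spec in E. exfalso; apply H; left; congruence.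
  - destruct (name_eqb Sg (n, al0) (a, al)) eqn:E; auto. f_equal. apply H.
    intro K. apply H0, filter_In. split; auto.
    destruct (name_eqb Sg (a, al) (n, al0)) eqn:E2; auto.
    apply name_eqb_spec in E2. rewrite E2 in E.
    assert (name_eqb Sg (n, al0) (n, al0) = true) by (apply name_eqb_spec; auto). congruence.
Qed.

Lemma fvars_allvars :
  (forall s (q : pat Sg s) v, In v (fvars q) -> In v (allvars q)) /\
  (forall l (qs : pats Sg l) v, In v (fvars_args Sg qs) -> In v (allvars_args Sg qs)).
Proof.
  apply pat_comb; intros; simpl in *; try rewrite in_app_iff in *; try tauto; firstorder.
  apply filter_In in H0. right. firstorder.
Qed.

Definition pswap_prf (p : perm Sg) be (b0 b1 : carM (SName be)) :
  fst (PF p (proj1_sig b0)) = fst (proj1_sig b1) :=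
  eq_trans (eq_trans (pf_sort Sg p _) (proj2_sig b0)) (eq_sym (proj2_sig b1)).

Definition pswap (p : perm Sg) be (b0 b1 : carM (SName be)) : perm Sg :=
  perm_comp Sg (swap Sg (PF p (proj1_sig b0)) (proj1_sig b1) (pswap_prf p be b0 b1)) p.

Lemma pswap_b0 p be b0 b1 : actM (pswap p be b0 b1) (SName be) b0 = b1.
Proof. apply sig_eq; simpl; unfold swapf; destruct atom_dec; congruence. Qed.

Lemma pswap_fix p be b0 b1 s (u : carM s) :
  ~ sM s (proj1_sig b0) u -> ~ sM s (proj1_sig b1) (actM p s u) ->
  actM (pswap p be b0 b1) s u = actM p s u.
Proof.
  intros H0 H1. unfold pswap. rewrite act_comp. apply swap_fix; auto.
  intro K. apply supp_act_inv in K. auto.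
Qed.

Lemma new_case s n be (p1 q1 : pat Sg s) r1 r2 p (v : carM s) :
  fin_val r1 -> fin_val r2 ->
  (forall b0 b1 : carM (SName be), ~ val_supp Sg M r1 (proj1_sig b0) ->
     ~ val_supp Sg M r2 (proj1_sig b1) ->
     forall w, denote Sg M p1 (upd_name Sg M r1 n be b0) w <->
               denote Sg M q1 (upd_name Sg M r2 n be b1) (actM (pswap p be b0 b1) s w)) ->
  (denote Sg M (PNew n be p1) r1 v <-> denote Sg M (PNew n be q1) r2 (actM p s v)).
Proof.
  intros F1 F2 Hy. simpl. split.
  - intros (b0 & H0 & Hd & Hs).
    destruct (fin_val_supp Sg M r2 F2) as [L2 HL2].
    destruct (elem_fin Sg M s (actM p s v)) as [S3 HS3].
    destruct (fresh_exists Sg (L2 ++ S3) be) as [c [Hc Hn]].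
    set (b1 := exist _ c Hc : carM (SName be)).
    assert (N1 : ~ val_supp Sg M r2 c) by (intro K; apply Hn, in_or_app; left; auto).
    assert (N2 : ~ sM s c (actM p s v)).
    { apply not_supp_iff. exists S3; split; auto. intro; apply Hn, in_or_app; right; auto. }
    exists b1. split; [exact N1|split; [|exact N2]].
    rewrite <- (pswap_fix p be b0 b1); auto.
    apply (Hy b0 b1 H0 N1). exact Hd.
  - intros (b1 & H1 & Hd & Hs).
    destruct (fin_val_supp Sg M r1 F1) as [L1 HL1].
    destruct (elem_fin Sg M s v) as [S3 HS3].
    destruct (fresh_exists Sg (L1 ++ S3) be) as [c [Hc Hn]].
    set (b0 := exist _ c Hc : carM (SName be)).
    assert (N1 : ~ val_supp Sg M r1 c) by (intro K; apply Hn, in_or_app; left; auto).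
    assert (N2 : ~ sM s c v).
    { apply not_supp_iff. exists S3; split; auto. intro; apply Hn, in_or_app; right; auto. }
    exists b0. split; [exact N1|split; [|exact N2]].
    apply (Hy b0 b1 N1 H1). rewrite (pswap_fix p be b0 b1); auto.
Qed.


Lemma name_eqb_false v w : v <> w -> name_eqb Sg v w = false.
Proof. intro N. destruct (name_eqb Sg v w) eqn:E; auto. apply name_eqb_spec in E; congruence. Qed.
Lemma var_eqb_false v w : v <> w -> var_eqb Sg v w = false.
Proof. intro N. destruct (var_eqb Sg v w) eqn:E; auto. apply var_eqb_spec in E; congruence. Qed.

Lemma fresh_name (L : list (nat * NS Sg)) al : exists a', ~ In (a', al) L.
Proof.
  exists (S (list_max (map fst L))). intro H.
  assert (K : In (fst (S (list_max (map fst L)), al)) (map fst L)) by (apply in_map; auto).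
  simpl in K.
  assert (K2 := proj1 (list_max_le (map fst L) (list_max (map fst L))) (le_n _)).
  rewrite Forall_forall in K2. specialize (K2 _ K). lia.
Qed.

Variable al : NS Sg.
Variable za : nat.

Definition Agr (FV : list (nat * srt)) (FN : list (nat * NS Sg)) a r1 r2 p :=
  (forall x t, In (x, t) FV -> vvar Sg M r2 x t = option_map (actM p t) (vvar Sg M r1 x t)) /\
  (forall n be, In (n, be) FN -> (n, be) <> (a, al) ->
     vname Sg M r2 n be = option_map (actM p (SName be)) (vname Sg M r1 n be)) /\
  (In (a, al) FN -> vvar Sg M r2 za (SName al) = option_map (actM p (SName al)) (vname Sg M r1 a al)).

Lemma Agr_mono FV FN FV' FN' a r1 r2 p : Agr FV FN a r1 r2 p ->
  (forall x, In x FV' -> In x FV) -> (forall n, In n FN' -> In n FN) -> Agr FV' FN' a r1 r2 p.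
Proof. intros [A1 [A2 A3]] H1 H2. split; [|split]; auto. Qed.

Lemma transfer_var r1 r2 p be (b0 b1 : carM (SName be)) x t :
  ~ val_supp Sg M r1 (proj1_sig b0) -> ~ val_supp Sg M r2 (proj1_sig b1) ->
  vvar Sg M r2 x t = option_map (actM p t) (vvar Sg M r1 x t) ->
  option_map (actM (pswap p be b0 b1) t) (vvar Sg M r1 x t) = option_map (actM p t) (vvar Sg M r1 x t).
Proof.
  intros H0 H1 E. destruct (vvar Sg M r1 x t) as [c|] eqn:E1; simpl in *; auto. f_equal.
  apply pswap_fix.
  - intro K; apply H0; left; exists x, t, c; split; auto.
  - intro K; apply H1; left; exists x, t, (actM p t c); split; auto.
Qed.

Lemma transfer_name r1 r2 p be (b0 b1 : carM (SName be)) m ga :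
  ~ val_supp Sg M r1 (proj1_sig b0) -> ~ val_supp Sg M r2 (proj1_sig b1) ->
  vname Sg M r2 m ga = option_map (actM p (SName ga)) (vname Sg M r1 m ga) ->
  option_map (actM (pswap p be b0 b1) (SName ga)) (vname Sg M r1 m ga) =
  option_map (actM p (SName ga)) (vname Sg M r1 m ga).
Proof.
  intros H0 H1 E. destruct (vname Sg M r1 m ga) as [c|] eqn:E1; simpl in *; auto. f_equal.
  apply (pswap_fix p be b0 b1 (SName ga) c).
  - intro K; apply supp_atom in K. apply H0; right; exists m, ga, c; split; auto.
  - intro K; apply supp_atom in K. apply H1; right; exists m, ga, (actM p (SName ga) c); split; auto.
Qed.

Lemma transfer_z r1 r2 p be (b0 b1 : carM (SName be)) a :
  ~ val_supp Sg M r1 (proj1_sig b0) -> ~ val_supp Sg M r2 (proj1_sig b1) ->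
  vvar Sg M r2 za (SName al) = option_map (actM p (SName al)) (vname Sg M r1 a al) ->
  option_map (actM (pswap p be b0 b1) (SName al)) (vname Sg M r1 a al) =
  option_map (actM p (SName al)) (vname Sg M r1 a al).
Proof.
  intros H0 H1 E. destruct (vname Sg M r1 a al) as [c|] eqn:E1; simpl in *; auto. f_equal.
  apply (pswap_fix p be b0 b1 (SName al) c).
  - intro K; apply supp_atom in K. apply H0; right; exists a, al, c; split; auto.
  - intro K; apply H1; left; exists za, (SName al), (actM p (SName al) c); split; auto.
Qed.

Lemma vvar_upd_name r n be u : vvar Sg M (upd_name Sg M r n be u) = vvar Sg M r.
Proof. reflexivity. Qed.
Lemma vname_upd_var r x t u : vname Sg M (upd_var Sg M r x t u) = vname Sg M r.
Proof. reflexivity. Qed.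

Definition Pm s (q : pat Sg s) := forall a r1 r2 p,
  ~ In (za, SName al) (allvars q) -> fin_val r1 -> fin_val r2 ->
  Agr (fvars q) (fnames q) a r1 r2 p ->
  forall v, denote Sg M q r1 v <-> denote Sg M (nsubst a al za q) r2 (actM p s v).
Definition Qm l (qs : pats Sg l) := forall a r1 r2 p,
  ~ In (za, SName al) (allvars_args Sg qs) -> fin_val r1 -> fin_val r2 ->
  Agr (fvars_args Sg qs) (fnames_args Sg qs) a r1 r2 p ->
  forall u, denote_args Sg M qs r1 u <-> denote_args Sg M (nsubst_args Sg a al za qs) r2 (actsM p l u).

Lemma some_act_iff p s (o : option (carM s)) v :
  o = Some v <-> option_map (actM p s) o = Some (actM p s v).
Proof.
  destruct o; simpl; split; intro H; try discriminate.
  - injection H; intro; subst; auto.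
  - injection H; intro E; apply act_inj in E; subst; auto.
Qed.

Ltac agr_app Ag := eapply Agr_mono; [exact Ag| intros; apply in_app_iff; tauto | intros; apply in_app_iff; tauto].

Lemma main_C : (forall s q, Pm s q) /\ (forall l qs, Qm l qs).
Proof.
  apply pat_comb; unfold Pm, Qm.
  -
    intros x s a r1 r2 p Hz F1 F2 [Av [An Az]] v. simpl.
    rewrite (Av x s (or_introl eq_refl)). apply some_act_iff.
  -
    intros n be a r1 r2 p Hz F1 F2 [Av [An Az]] v. simpl.
    destruct (name_eqb Sg (n, be) (a, al)) eqn:E.
    + apply name_eqb_spec in E. injection E; intros E1 E2; subst n be. simpl.
      rewrite (Az (or_introl eq_refl)). apply (some_act_iff p (SName al)).
    + simpl. rewrite (An n be (or_introl eq_refl)). apply (some_act_iff p (SName be)).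
      intro K; rewrite K in E; rewrite (proj2 (name_eqb_spec Sg _ _) eq_refl) in E; discriminate.
  -
    intros s q1 IH1 q2 IH2 a r1 r2 p Hz F1 F2 Ag v. simpl in Hz |- *.
    rewrite in_app_iff in Hz.
    rewrite (IH1 a r1 r2 p), (IH2 a r1 r2 p); try tauto; agr_app Ag.
  -
    intros s q IH a r1 r2 p Hz F1 F2 Ag v. simpl in Hz |- *.
    rewrite (IH a r1 r2 p Hz F1 F2 Ag). reflexivity.
  -
    intros s x t q IH a r1 r2 p Hz F1 F2 Ag v. simpl in Hz |- *.
    assert (Nx : (za, SName al) <> (x, t)) by (intro K; apply Hz; left; symmetry; exact K).
    assert (AgU : forall u, Agr (fvars q) (fnames q) a (upd_var Sg M r1 x t u)
                            (upd_var Sg M r2 x t (actM p t u)) p).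
    { intro u. destruct Ag as [Av [An Az]]. split; [|split].
      - intros y s' Hy. destruct (var_eqb Sg (y, s') (x, t)) eqn:E.
        + apply var_eqb_spec in E. injection E; intros; subst. rewrite !upd_var_eq. reflexivity.
        + assert (N : (y, s') <> (x, t)) by (intro K; apply var_eqb_spec in K; congruence).
          rewrite !upd_var_neq by auto. apply Av. simpl. apply filter_In. rewrite E; auto.
      - intros n be Hn Hne. rewrite !vname_upd_var. apply An; auto.
      - intro Hin. rewrite upd_var_neq by auto. apply Az; auto. }
    split.
    + intros [u Hu]. exists (actM p t u). apply (IH a (upd_var Sg M r1 x t u)); auto.
      * apply fin_upd_var; auto.
      * apply fin_upd_var; auto.
    + intros [u' Hu']. exists (actM (perm_inv Sg p) t u').
      rewrite <- (act_inv_l Sg M p t u') in Hu'.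
      apply (IH a _ (upd_var Sg M r2 x t (actM p t (actM (perm_inv Sg p) t u'))) p); auto.
      * apply fin_upd_var; auto.
      * apply fin_upd_var; auto.
  -
    intros sg qs IH a r1 r2 p Hz F1 F2 Ag v. simpl in Hz |- *. split.
    + intros [u [Hu Hm]]. exists (actsM p _ u). split.
      * apply (IH a r1 r2 p); auto.
      * apply (minterp_equiv Sg M); auto.
    + intros [u' [Hu Hm]]. exists (actsM (perm_inv Sg p) _ u'). split.
      * rewrite <- (acts_inv_l Sg M p _ u') in Hu. apply (IH a r1 r2 p); auto.
      * apply (minterp_equiv Sg M sg (perm_inv Sg p)) in Hm.
        rewrite act_inv_r in Hm. exact Hm.
  -
    intros s n be q IH a r1 r2 p Hz F1 F2 [Av [An Az]] v. simpl in Hz.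
    change (nsubst a al za (PNew n be q)) with
      (if name_eqb Sg (n, be) (a, al) then PNew n be q else PNew n be (nsubst a al za q)).
    destruct (name_eqb Sg (n, be) (a, al)) eqn:E.
    + apply name_eqb_spec in E.
      destruct (fresh_name (fnames q) al) as [a' Ha'].
      apply new_case; auto. intros b0 b1 H0 H1 w.
      pose proof (IH a' (upd_name Sg M r1 n be b0) (upd_name Sg M r2 n be b1) (pswap p be b0 b1) Hz
                    (fin_upd_name Sg M _ _ _ _ F1) (fin_upd_name Sg M _ _ _ _ F2)) as K.
      rewrite (proj1 (nsubst_id_all a' al za) _ q Ha') in K. apply K.
      split; [|split].
      * intros x t Hx. rewrite !vvar_upd_name, (Av x t Hx). symmetry. apply (transfer_var r1 r2); auto.
      * intros m ga Hm Hne. destruct (name_eqb Sg (m, ga) (n, be)) eqn:E2.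
        -- apply name_eqb_spec in E2. injection E2; intros; subst m ga.
           rewrite !upd_name_eq. exact (f_equal Some (eq_sym (pswap_b0 p be b0 b1))).
        -- assert (N : (m, ga) <> (n, be)) by (intro K2; apply name_eqb_spec in K2; congruence).
           rewrite !upd_name_neq by auto.
           assert (Hm' : In (m, ga) (fnames (PNew n be q))) by (simpl; apply filter_In; rewrite E2; auto).
           assert (Hne' : (m, ga) <> (a, al)) by congruence.
           rewrite (An m ga Hm' Hne').
           symmetry. apply (transfer_name r1 r2); auto.
      * intro Hin. contradiction.
    + assert (Ne : (n, be) <> (a, al)) by (intro K2; apply name_eqb_spec in K2; congruence).
      apply new_case; auto. intros b0 b1 H0 H1 w.
      apply (IH a); auto using fin_upd_name.
      split; [|split].
      * intros x t Hx. rewrite !vvar_upd_name, (Av x t Hx). symmetry. apply (transfer_var r1 r2); auto.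
      * intros m ga Hm Hne. destruct (name_eqb Sg (m, ga) (n, be)) eqn:E2.
        -- apply name_eqb_spec in E2. injection E2; intros; subst m ga.
           rewrite !upd_name_eq. exact (f_equal Some (eq_sym (pswap_b0 p be b0 b1))).
        -- assert (N : (m, ga) <> (n, be)) by (intro K2; apply name_eqb_spec in K2; congruence).
           rewrite !upd_name_neq by auto.
           assert (Hm' : In (m, ga) (fnames (PNew n be q))) by (simpl; apply filter_In; rewrite E2; auto).
           rewrite (An m ga Hm' Hne).
           symmetry. apply (transfer_name r1 r2); auto.
      * intro Hin. assert (Hin' : In (a, al) (fnames (PNew n be q)))
          by (simpl; apply filter_In; rewrite name_eqb_false by congruence; auto).
        rewrite vvar_upd_name, upd_name_neq by congruence. rewrite (Az Hin').
        symmetry. apply (transfer_z r1 r2); auto.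
  -
    intros s1 s2 q1 IH1 q2 IH2 a r1 r2 p Hz F1 F2 Ag v. simpl in Hz |- *.
    rewrite in_app_iff in Hz.
    rewrite (IH1 a r1 r2 p), (IH2 a r1 r2 p); try tauto; agr_app Ag.
  -
    intros al' t q1 IH1 q2 IH2 a r1 r2 p Hz F1 F2 Ag v. simpl in Hz |- *.
    rewrite in_app_iff in Hz.
    assert (Ag1 : Agr (fvars q1) (fnames q1) a r1 r2 p) by agr_app Ag.
    assert (Ag2 : Agr (fvars q2) (fnames q2) a r1 r2 p) by agr_app Ag.
    split.
    + intros (a0 & u & H1 & H2 & H3). exists (actM p (SName al') a0), (actM p t u).
      split; [|split].
      * apply (IH1 a r1 r2 p); auto; tauto.
      * apply (IH2 a r1 r2 p); auto; tauto.
      * intro K. apply H3. apply (supp_act_inv Sg M t (proj1_sig a0) p u). exact K.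
    + intros (a0 & u & H1 & H2 & H3).
      exists (actM (perm_inv Sg p) (SName al') a0), (actM (perm_inv Sg p) t u).
      split; [|split].
      * rewrite <- (act_inv_l Sg M p (SName al') a0) in H1. apply (IH1 a r1 r2 p); auto; tauto.
      * rewrite <- (act_inv_l Sg M p t u) in H2. apply (IH2 a r1 r2 p); auto; tauto.
      * intro K. apply H3. apply (supp_act Sg M _ _ p) in K. simpl in K.
        rewrite pf_pinv, act_inv_l in K. exact K.
  -
    intros t q IH a r1 r2 p Hz F1 F2 Ag v. simpl in Hz |- *. split.
    + intros [u Hu]. exists u. apply (proj1 (IH a r1 r2 p Hz F1 F2 Ag u)). exact Hu.
    + intros [u Hu]. exists u. apply (proj2 (IH a r1 r2 p Hz F1 F2 Ag u)). exact Hu.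
  -
    intros; simpl; tauto.
  -
    intros s l q IH1 qs IH2 a r1 r2 p Hz F1 F2 Ag u. simpl in Hz |- *.
    rewrite in_app_iff in Hz.
    rewrite (IH1 a r1 r2 p), (IH2 a r1 r2 p); try tauto; agr_app Ag.
Qed.

End B.

Section Tup.
Variable Sg : signature.
Variable M : model Sg.
Local Notation srt := (sort (NS Sg) (BS Sg)).
Local Notation carM := (car Sg (mcar Sg M)).
Local Notation actM p s := (act Sg (mcar Sg M) (mact Sg M) p s).
Local Notation sM := (sM Sg M).

Lemma bs_tup_fwd bs T (t : pat Sg T) r w b0 :
  denote Sg M (bs_tup Sg bs t) r w -> ~ sM _ b0 w ->
  (forall m ga c, In (m, ga) bs -> vname Sg M r m ga = Some c -> ~ sM (SName ga) b0 c) /\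
  exists w', denote Sg M t r w' /\ ~ sM T b0 w'.
Proof.
  revert w. induction bs as [|[m0 ga0] bs IH]; simpl; intros w Hd Hs.
  - split; [intros; tauto|]. exists w; auto.
  - destruct Hd as [Hn Hr].
    assert (Hs1 : ~ sM (SName ga0) b0 (fst w)) by (intro K; apply Hs, (supp_fst Sg M (SName ga0) (bs_sort Sg bs T)), K).
    assert (Hs2 : ~ sM (bs_sort Sg bs T) b0 (snd w)) by (intro K; apply Hs, (supp_snd Sg M (SName ga0) (bs_sort Sg bs T)), K).
    destruct (IH _ Hr Hs2) as [IH1 IH2]. split; auto.
    intros m ga c [E|Hin] Hc.
    + injection E; intros; subst. rewrite Hn in Hc. injection Hc; intro; subst. exact Hs1.
    + eauto.
Qed.

Lemma bs_tup_bwd bs T (t : pat Sg T) r b0 :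
  (forall m ga, In (m, ga) bs -> exists c, vname Sg M r m ga = Some c /\ ~ sM (SName ga) b0 c) ->
  (exists w', denote Sg M t r w' /\ ~ sM T b0 w') ->
  exists w, denote Sg M (bs_tup Sg bs t) r w /\ ~ sM _ b0 w.
Proof.
  induction bs as [|[m0 ga0] bs IH]; simpl; intros Hn Ht.
  - exact Ht.
  - destruct (Hn m0 ga0 (or_introl eq_refl)) as [c [Hc Nc]].
    destruct IH as [w [Hw Nw]]; [intros; apply Hn; right; auto | exact Ht |].
    exists (c, w). split; [split; auto|]. apply fresh_pair; simpl; auto.
Qed.

Lemma xs_tup_fwd xs y tau r w b0 :
  denote Sg M (xs_tup Sg xs y tau) r w -> ~ sM _ b0 w ->
  (forall x s c, In (x, s) xs -> vvar Sg M r x s = Some c -> ~ sM s b0 c) /\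
  (forall c, vvar Sg M r y tau = Some c -> ~ sM tau b0 c).
Proof.
  revert w. induction xs as [|[x0 s0] xs IH]; simpl; intros w Hd Hs.
  - split; [intros; tauto|]. intros c Hc. rewrite Hd in Hc. injection Hc; intro; subst; auto.
  - destruct Hd as [Hn Hr].
    assert (Hs1 : ~ sM s0 b0 (fst w)) by (intro K; apply Hs, (supp_fst Sg M s0 (xs_sort Sg xs tau)), K).
    assert (Hs2 : ~ sM (xs_sort Sg xs tau) b0 (snd w)) by (intro K; apply Hs, (supp_snd Sg M s0 (xs_sort Sg xs tau)), K).
    destruct (IH _ Hr Hs2) as [IH1 IH2]. split; auto.
    intros m ga c [E|Hin] Hc.
    + injection E; intros; subst. rewrite Hn in Hc. injection Hc; intro; subst. exact Hs1.
    + eauto.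
Qed.

Lemma xs_tup_bwd xs y tau r b0 :
  (forall x s, In (x, s) xs -> exists c, vvar Sg M r x s = Some c /\ ~ sM s b0 c) ->
  (exists c, vvar Sg M r y tau = Some c /\ ~ sM tau b0 c) ->
  exists w, denote Sg M (xs_tup Sg xs y tau) r w /\ ~ sM _ b0 w.
Proof.
  induction xs as [|[m0 ga0] xs IH]; simpl; intros Hn Ht.
  - exact Ht.
  - destruct (Hn m0 ga0 (or_introl eq_refl)) as [c [Hc Nc]].
    destruct IH as [w [Hw Nw]]; [intros; apply Hn; right; auto | exact Ht |].
    exists (c, w). split; [split; auto|]. apply fresh_pair; simpl; auto.
Qed.
End Tup.

Section Main.
Variable Sg : signature.
Variable M : model Sg.
Local Notation srt := (sort (NS Sg) (BS Sg)).
Local Notation carM := (car Sg (mcar Sg M)).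
Local Notation actM p s := (act Sg (mcar Sg M) (mact Sg M) p s).
Local Notation sM := (sM Sg M).
Variable tau : srt.
Variable al : NS Sg.
Variable phi : pat Sg tau.
Variable xs : list (nat * srt).
Variable bs : list (nat * NS Sg).
Variables a za y : nat.
Hypothesis Hfv : forall v, In v (fvars phi) -> In v xs.
Hypothesis Hfn : forall n, In n (fnames phi) -> In n bs \/ n = (a, al).
Hypothesis Hab : ~ In (a, al) bs.
Hypothesis Hzphi : ~ In (za, SName al) (allvars phi).
Hypothesis Hzxs : ~ In (za, SName al) xs.
Hypothesis Hzy : (za, SName al) <> (y, tau).
Hypothesis Hyxs : ~ In (y, tau) xs.

Definition FreshOK (r : valuation Sg M) (b : atom Sg) (v : carM tau) :=
  (forall m ga c, In (m, ga) bs -> vname Sg M r m ga = Some c -> ~ sM (SName ga) b c) /\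
  (forall x s c, In (x, s) xs -> vvar Sg M r x s = Some c -> ~ sM s b c) /\
  ~ sM tau b v.

Lemma guard_iff r (u : carM (SName al)) v :
  (forall x s, In (x, s) xs -> vvar Sg M r x s <> None) ->
  (forall m ga, In (m, ga) bs -> vname Sg M r m ga <> None) ->
  (denote Sg M (fresh_guard al za bs xs y tau) (upd_var Sg M r za (SName al) u) v <->
   FreshOK r (proj1_sig u) v).
Proof.
  intros D1 D2. unfold fresh_guard, tuple_pat. cbn [denote].
  assert (Lx : forall w x s, In (x, s) xs ->
     vvar Sg M (upd_var Sg M (upd_var Sg M r za (SName al) u) y tau w) x s = vvar Sg M r x s).
  { intros w x s Hx. rewrite !upd_var_neq; auto; intro K; rewrite K in Hx; auto. }
  split.
  - intros (w & Hy & _ & a0 & u' & Hz & Ht & Hs).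
    rewrite upd_var_eq in Hy. injection Hy; intro; subst w.
    rewrite upd_var_neq, upd_var_eq in Hz by auto. injection Hz; intro; subst a0.
    destruct (bs_tup_fwd Sg M _ _ _ _ _ _ Ht Hs) as [N1 [w' [Hw' Nw']]].
    destruct (xs_tup_fwd Sg M _ _ _ _ _ _ Hw' Nw') as [N2 N3].
    split; [|split].
    + intros m ga c Hm Hc. apply (N1 m ga c Hm). exact Hc.
    + intros x s c Hx Hc. apply (N2 x s c Hx). rewrite Lx; auto.
    + apply N3. apply upd_var_eq.
  - intros [N1 [N2 N3]]. exists v. split; [apply upd_var_eq|]. exists tt, u.
    destruct (bs_tup_bwd Sg M bs _ (xs_tup Sg xs y tau)
               (upd_var Sg M (upd_var Sg M r za (SName al) u) y tau v) (proj1_sig u))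
      as [w [Hw Nw]].
    + intros m ga Hm. destruct (vname Sg M r m ga) as [c|] eqn:E.
      * exists c; split; auto. apply (N1 m ga c Hm E).
      * exfalso; apply (D2 m ga Hm E).
    + apply xs_tup_bwd.
      * intros x s Hx. rewrite Lx by auto. destruct (vvar Sg M r x s) as [c|] eqn:E.
        -- exists c; split; auto. apply (N2 x s c Hx E).
        -- exfalso; apply (D1 x s Hx E).
      * exists v. split; auto. apply upd_var_eq.
    + exists w. split; [|split]; auto. rewrite upd_var_neq, upd_var_eq by auto. reflexivity.
Qed.


Lemma fvars_bs_tup (l0 : list (nat * NS Sg)) T (t : pat Sg T) : fvars (bs_tup Sg l0 t) = fvars t.
Proof. induction l0 as [|b l IH]; simpl; auto. Qed.
Lemma fnames_bs_tup (l0 : list (nat * NS Sg)) T (t : pat Sg T) n : In n l0 -> In n (fnames (bs_tup Sg l0 t)).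
Proof. induction l0 as [|b l IH]; simpl; intros H; [tauto|]. destruct H; subst; auto. left; destruct n; reflexivity.
  Qed.
Lemma fvars_xs_tup (l0 : list (nat * srt)) v : In v l0 -> In v (fvars (xs_tup Sg l0 y tau)).
Proof. induction l0 as [|b l IH]; simpl; intros H; [tauto|]. destruct H; subst; auto. left; destruct v; reflexivity. Qed.

Lemma suit_D (r : valuation Sg M) :
  suitable Sg M r (PEx za (SName al) (PAnd (fresh_guard al za bs xs y tau) (nsubst a al za phi))) ->
  (forall x s, In (x, s) xs -> vvar Sg M r x s <> None) /\
  (forall m ga, In (m, ga) bs -> vname Sg M r m ga <> None).
Proof.
  intros [S1 S2]. split.
  - intros x s Hx. apply (S1 (x, s)). cbn [fvars]. apply filter_In. split.
    + apply in_or_app; left. unfold fresh_guard, tuple_pat. cbn [fvars]. apply filter_In. split.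
      * right; right. rewrite fvars_bs_tup. apply fvars_xs_tup; auto.
      * rewrite var_eqb_false; auto. intro K; rewrite K in Hx; auto.
    + rewrite var_eqb_false; auto. intro K; rewrite K in Hx; auto.
  - intros m ga Hm. apply (S2 (m, ga)). cbn [fnames]. apply in_or_app; left.
    unfold fresh_guard, tuple_pat. cbn [fnames]. apply in_or_app; right.
    apply fnames_bs_tup; auto.
Qed.

Lemma option_map_id s (o : option (carM s)) : option_map (actM (perm_id Sg) s) o = o.
Proof. destruct o; simpl; auto. rewrite act_id; auto. Qed.

Lemma za_notfv : forall x t, In (x, t) (fvars phi) -> (x, t) <> (za, SName al).
Proof. intros x t H K. rewrite K in H. apply Hzphi, (proj1 (fvars_allvars Sg)). exact H. Qed.

Lemma K1 r (a0 : carM (SName al)) v : fin_val Sg M r ->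
  denote Sg M phi (upd_name Sg M r a al a0) v <->
  denote Sg M (nsubst a al za phi) (upd_var Sg M r za (SName al) a0) v.
Proof.
  intro F.
  pose proof (proj1 (main_C Sg M al za) tau phi a (upd_name Sg M r a al a0)
     (upd_var Sg M r za (SName al) a0) (perm_id Sg) Hzphi
     (fin_upd_name Sg M _ _ _ _ F) (fin_upd_var Sg M _ _ _ _ F)) as K.
  refine (iff_trans (K _ v) _); [| rewrite act_id; reflexivity]. split; [|split].
  - intros x t Hx. rewrite vvar_upd_name, option_map_id. apply upd_var_neq. apply za_notfv; auto.
  - intros n be Hn Hne. rewrite vname_upd_var, option_map_id, upd_name_neq; auto.
  - intros _. rewrite option_map_id, upd_var_eq, upd_name_eq. reflexivity.
Qed.

Lemma K2 r (a0 a1 : carM (SName al)) v : fin_val Sg M r ->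
  FreshOK r (proj1_sig a0) v -> FreshOK r (proj1_sig a1) v ->
  denote Sg M phi (upd_name Sg M r a al a0) v <->
  denote Sg M (nsubst a al za phi) (upd_var Sg M r za (SName al) a1) v.
Proof.
  intros F [N1 [N2 N3]] [P1 [P2 P3]].
  assert (prf : fst (proj1_sig a0) = fst (proj1_sig a1))
    by (rewrite (proj2_sig a0), (proj2_sig a1); reflexivity).
  set (pi := swap Sg (proj1_sig a0) (proj1_sig a1) prf).
  pose proof (proj1 (main_C Sg M al za) tau phi a (upd_name Sg M r a al a0)
     (upd_var Sg M r za (SName al) a1) pi Hzphi
     (fin_upd_name Sg M _ _ _ _ F) (fin_upd_var Sg M _ _ _ _ F)) as K.
  refine (iff_trans (K _ v) _); [| unfold pi; rewrite (swap_fix Sg M _ _ prf tau v N3 P3); reflexivity].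
  split; [|split].
  - intros x t Hx. rewrite vvar_upd_name, upd_var_neq by (apply za_notfv; auto).
    destruct (vvar Sg M r x t) as [c|] eqn:E; simpl; auto. f_equal. symmetry.
    apply swap_fix; [apply (N2 x t c) | apply (P2 x t c)]; auto.
  - intros n be Hn Hne. rewrite vname_upd_var, upd_name_neq by auto.
    assert (Hb : In (n, be) bs) by (destruct (Hfn _ Hn); auto; contradiction).
    destruct (vname Sg M r n be) as [c|] eqn:E; simpl; auto. f_equal. symmetry.
    apply (swap_fix Sg M _ _ prf (SName be) c); [apply (N1 n be c) | apply (P1 n be c)]; auto.
  - intros _. rewrite upd_var_eq, upd_name_eq. simpl. f_equal. apply sig_eq. simpl.
    unfold swapf. destruct atom_dec; congruence.
Qed.

Lemma fresh_for r (v : carM tau) : fin_val Sg M r ->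
  exists a0 : carM (SName al), ~ val_supp Sg M r (proj1_sig a0) /\ ~ sM tau (proj1_sig a0) v.
Proof.
  intro F. destruct (fin_val_supp Sg M r F) as [L HL]. destruct (elem_fin Sg M tau v) as [S HS].
  destruct (fresh_exists Sg (L ++ S) al) as [c [Hc Hn]].
  exists (exist _ c Hc). simpl. split.
  - intro K; apply Hn, in_or_app; left; auto.
  - apply not_supp_iff. exists S; split; auto. intro; apply Hn, in_or_app; right; auto.
Qed.

Lemma fresh_ok r b v : ~ val_supp Sg M r b -> ~ sM tau b v -> FreshOK r b v.
Proof.
  intros H1 H2. split; [|split]; auto.
  - intros m ga c Hm Hc K. apply supp_atom in K. apply H1. right. exists m, ga, c; split; auto.
  - intros x s c Hx Hc K. apply H1. left. exists x, s, c; split; auto.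
Qed.

Lemma main_sec :
  pequiv M (PNew a al phi)
    (PEx za (SName al) (PAnd (fresh_guard al za bs xs y tau) (nsubst a al za phi)))
  /\
  pequiv M (PNew a al phi)
    (PAll za (SName al) (PImp (fresh_guard al za bs xs y tau) (nsubst a al za phi))).
Proof.
  split.
  - intros r Hval _ Hs v. apply valid_fin in Hval as F.
    destruct (suit_D r Hs) as [D1 D2].
    cbn [denote]. split.
    + intros (a0 & Hv & Hp & Hsp). exists a0. split.
      * apply guard_iff; auto. apply fresh_ok; auto.
      * apply K1; auto.
    + intros [u [Hg Hph]]. destruct (fresh_for r v F) as [a0 [Hv Hsp]].
      exists a0. split; [exact Hv|split; [|exact Hsp]].
      apply (K2 r a0 u v F); auto.
      * apply fresh_ok; auto.
      * apply (guard_iff r u v D1 D2); auto.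
  - intros r Hval _ Hs v. apply valid_fin in Hval as F.
    destruct (suit_D r Hs) as [D1 D2].
    cbn [denote PAll PImp POr]. split.
    + intros (a0 & Hv & Hp & Hsp) [u Hu]. apply Hu. intros [Hg Hph]. apply Hph.
      apply NNPP in Hg.
      apply (K2 r a0 u v F); auto.
      * apply fresh_ok; auto.
      * apply (guard_iff r u v D1 D2); auto.
    + intro H. destruct (fresh_for r v F) as [a0 [Hv Hsp]].
      assert (Hg : denote Sg M (fresh_guard al za bs xs y tau) (upd_var Sg M r za (SName al) a0) v)
        by (apply guard_iff; auto; apply fresh_ok; auto).
      assert (Hph : denote Sg M (nsubst a al za phi) (upd_var Sg M r za (SName al) a0) v).
      { apply NNPP. intro Hn. apply H. exists a0. intro K. apply K. split; auto. }
      exists a0. split; [exact Hv|split; [|exact Hsp]].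
      apply K1; auto.
Qed.

End Main.

Theorem mainTheorem10 (Sg : signature) (M : model Sg) (tau : sort (NS Sg) (BS Sg))
  (al : NS Sg) (phi : pat Sg tau)
  (xs : list (nat * sort (NS Sg) (BS Sg))) (bs : list (nat * NS Sg))
  (a za y : nat) :
  (forall v, In v (fvars phi) -> In v xs) ->
  (forall n, In n (fnames phi) -> In n bs \/ n = (a, al)) ->
  ~ In (a, al) bs ->
  ~ In (za, SName al) (allvars phi) ->
  ~ In (za, SName al) xs ->
  (za, SName al) <> (y, tau) ->
  ~ In (y, tau) xs ->
  pequiv M (PNew a al phi)
    (PEx za (SName al) (PAnd (fresh_guard al za bs xs y tau) (nsubst a al za phi)))
  /\
  pequiv M (PNew a al phi)
    (PAll za (SName al) (PImp (fresh_guard al za bs xs y tau) (nsubst a al za phi))).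
Proof.
  intros. eapply main_sec; eauto.
Qed.
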